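(* For $t\in(0,1)$ and all $n\ge 0$ (with $n\ge1$ where $n-1$ indices or $\beta_n$ occur), the following identities hold: $$r_{n+1}+r_n=(t-\alpha_n)R_n,$$ $$-(y_{n+1}+y_n)=(\alpha_n-1)x_n+\beta,$$ $$y_{n+1}+y_n-r_{n+1}-r_n=2n+1+\alpha-\alpha_n(x_n-R_n),$$ $$\beta_nR_nR_{n-1}=r_n^2,$$ $$\beta_nx_nx_{n-1}=y_n^2+\beta y_n,$$ $$\beta_n(x_n-R_n)(x_{n-1}-R_{n-1})=(y_n-r_n-n)^2-\alpha(y_n-r_n-n),$$ $$\beta_n(x_nR_{n-1}+x_{n-1}R_n)=(2n+\alpha+\beta)y_n-(2n+\alpha)r_n+2y_nr_n-n(n+\alpha).$$
   Context: Fix $\alpha>0$, $\beta>0$, and real $A,B$ with $A\ge0$, $A+B\ge0$, not both zero; $\theta$ is the Heaviside step function. For $t\in(0,1)$ let $w(x;t)=x^\alpha(1-x)^\beta(A+B\theta(x-t))$ on $[0,1]$, and let $P_n(x)=P_n(x;t)=x^n+\mathsf p_1(n,t)x^{n-1}+\cdots$ be the monic orthogonal polynomials: $\int_0^1P_iP_jw\,dx=h_i(t)\delta_{ij}$, $h_i>0$, satisfying $xP_n=P_{n+1}+\alpha_nP_n+\beta_nP_{n-1}$, $P_{-1}=0$, $\beta_n=h_n/h_{n-1}$, $\mathsf p_1(0,t)=0$. Define $R_n(t)=B\,t^\alpha(1-t)^\beta P_n(t;t)^2/h_n$, $r_n(t)=B\,t^\alpha(1-t)^\beta P_n(t;t)P_{n-1}(t;t)/h_{n-1}$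 ($r_0=0$), $x_n(t)=\frac{\beta}{h_n}\int_0^1\frac{P_n(y)^2}{1-y}\,y^\alpha(1-y)^\beta(A+B\theta(y-t))\,dy$, $y_n(t)=\frac{\beta}{h_{n-1}}\int_0^1\frac{P_n(y)P_{n-1}(y)}{1-y}\,y^\alpha(1-y)^\beta(A+B\theta(y-t))\,dy$ ($y_0=0$). *)

(* Defs.v *)
From Stdlib Require Import Reals Lra ClassicalEpsilon.
Open Scope R_scope.

(* real power x^a on [0,oo), with 0^a := 0 (a>0) *)
Definition rpow (x a : R) : R :=
  if Rlt_dec 0 x then Rpower x a else 0.

(* Heaviside step function (value at 0 is irrelevant for integrals) *)
Definition theta (z : R) : R := if Rle_dec 0 z then 1 else 0.

Definition w (alpha beta A B t x : R) : R :=
  rpow x alpha * rpow (1 - x) beta * (A + B * theta (x - t)).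

Definition improper_int01 (f : R -> R) (l : R) : Prop :=
  (forall a b, 0 < a -> a <= b -> b < 1 ->
     exists _ : Riemann_integrable f a b, True) /\
  (forall eps, eps > 0 -> exists delta, delta > 0 /\
     forall a b (pr : Riemann_integrable f a b),
       0 < a -> a < delta -> 1 - delta < b -> b < 1 ->
       Rabs (RiemannInt pr - l) < eps).

Definition Int01 (f : R -> R) : R :=
  epsilon (inhabits 0) (fun l => improper_int01 f l).

Fixpoint psum (c : nat -> R) (x : R) (n : nat) : R :=
  match n with
  | O => 0
  | S m => psum c x m + c m * x ^ m
  end.

Definition monic_poly (n : nat) (f : R -> R) : Prop :=
  exists c : nat -> R, forall x, f x = x ^ n + psum c x n.

Definition Pprev (P : nat -> R -> R) (n : nat) : R -> R :=
  match n with O => fun _ => 0 | S m => P m end.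

Definition hn (alpha beta A B t : R) (P : nat -> R -> R) (n : nat) : R :=
  Int01 (fun x => P n x ^ 2 * w alpha beta A B t x).

(* beta_n = h_n / h_{n-1}  (used for n >= 1) *)
Definition betan (alpha beta A B t : R) (P : nat -> R -> R) (n : nat) : R :=
  hn alpha beta A B t P n / hn alpha beta A B t P (pred n).

Definition Rn (alpha beta A B t : R) (P : nat -> R -> R) (n : nat) : R :=
  B * rpow t alpha * rpow (1 - t) beta * P n t ^ 2 / hn alpha beta A B t P n.

Definition rn (alpha beta A B t : R) (P : nat -> R -> R) (n : nat) : R :=
  match n with
  | O => 0
  | S m => B * rpow t alpha * rpow (1 - t) beta * P n t * P m t
           / hn alpha beta A B t P m
  end.

Definition xn (alpha beta A B t : R) (P : nat -> R -> R) (n : nat) : R :=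
  beta / hn alpha beta A B t P n *
  Int01 (fun y => P n y ^ 2 / (1 - y) * w alpha beta A B t y).

Definition yn (alpha beta A B t : R) (P : nat -> R -> R) (n : nat) : R :=
  match n with
  | O => 0
  | S m => beta / hn alpha beta A B t P m *
           Int01 (fun y => P n y * P m y / (1 - y) * w alpha beta A B t y)
  end.

(* Main.v *)
Require Import Defs.
From Stdlib Require Import Reals Lra Lia FunctionalExtensionality ClassicalEpsilon RList.
Open Scope R_scope.


Lemma dl_plus f g x a b : derivable_pt_lim f x a -> derivable_pt_lim g x b ->
  derivable_pt_lim (fun y => f y + g y) x (a + b).
Proof. intros; exact (derivable_pt_lim_plus f g x a b H H0). Qed.
Lemma dl_mult f g x a b : derivable_pt_lim f x a -> derivable_pt_lim g x b ->
  derivable_pt_lim (fun y => f y * g y) x (a * g x + f x * b).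
Proof. intros; exact (derivable_pt_lim_mult f g x a b H H0). Qed.
Lemma dl_const c x : derivable_pt_lim (fun _ => c) x 0.
Proof. exact (derivable_pt_lim_const c x). Qed.
Lemma dl_id x : derivable_pt_lim (fun y => y) x 1.
Proof. exact (derivable_pt_lim_id x). Qed.
Lemma dl_comp f g x a b : derivable_pt_lim f x a -> derivable_pt_lim g (f x) b ->
  derivable_pt_lim (fun y => g (f y)) x (b * a).
Proof. intros; exact (derivable_pt_lim_comp f g x a b H H0). Qed.
Lemma dl_ext f g x l : (forall y, f y = g y) -> derivable_pt_lim f x l -> derivable_pt_lim g x l.
Proof. intros H; replace g with f; auto; apply functional_extensionality; auto. Qed.
Lemma dl_eq f x l l' : l = l' -> derivable_pt_lim f x l -> derivable_pt_lim f x l'.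
Proof. intros ->; auto. Qed.

Lemma dl_cont f x l : derivable_pt_lim f x l -> continuity_pt f x.
Proof. intros H. apply derivable_continuous_pt. exists l; exact H. Qed.

Lemma cp_plus f g x : continuity_pt f x -> continuity_pt g x -> continuity_pt (fun y => f y + g y) x.
Proof. intros; exact (continuity_pt_plus f g x H H0). Qed.
Lemma cp_mult f g x : continuity_pt f x -> continuity_pt g x -> continuity_pt (fun y => f y * g y) x.
Proof. intros; exact (continuity_pt_mult f g x H H0). Qed.
Lemma cp_const c x : continuity_pt (fun _ => c) x.
Proof. apply continuity_pt_const. intros a b; reflexivity. Qed.
Lemma cp_id x : continuity_pt (fun y => y) x.
Proof. exact (derivable_continuous_pt _ _ (derivable_pt_id x)). Qed.
Lemma cp_ext f g x : (forall y, f y = g y) -> continuity_pt f x -> continuity_pt g x.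
Proof. intros H; replace g with f; auto; apply functional_extensionality; auto. Qed.
Lemma cp_comp f g x : continuity_pt f x -> continuity_pt g (f x) -> continuity_pt (fun y => g (f y)) x.
Proof. intros; exact (continuity_pt_comp f g x H H0). Qed.

Lemma dl_local f g x l d : 0 < d -> (forall y, Rabs (y - x) < d -> f y = g y) ->
  derivable_pt_lim f x l -> derivable_pt_lim g x l.
Proof.
  intros Hd Heq H eps Heps. destruct (H eps Heps) as [del Hdel].
  assert (Hm : 0 < Rmin del d) by (apply Rmin_pos; [apply cond_pos|lra]).
  exists (mkposreal _ Hm). intros h Hh Hlt. simpl in Hlt.
  rewrite <- !Heq.
  - apply Hdel; auto. apply Rlt_le_trans with (1 := Hlt); apply Rmin_l.
  - unfold Rminus; rewrite Rplus_opp_r, Rabs_R0; lra.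
  - replace (x + h - x) with h by ring. apply Rlt_le_trans with (1 := Hlt); apply Rmin_r.
Qed.

Lemma rpow_pos x c : 0 < x -> rpow x c = Rpower x c.
Proof. intros; unfold rpow; destruct (Rlt_dec 0 x); [auto|lra]. Qed.
Lemma rpow_nonpos x c : x <= 0 -> rpow x c = 0.
Proof. intros; unfold rpow; destruct (Rlt_dec 0 x); [lra|auto]. Qed.
Lemma Rpower_gt0 x c : 0 < Rpower x c.
Proof. unfold Rpower; apply exp_pos. Qed.
Lemma rpow_ge0 x c : 0 <= rpow x c.
Proof. unfold rpow; destruct (Rlt_dec 0 x); [left; apply Rpower_gt0|lra]. Qed.
Lemma Rpower_le1 x c : 0 < x <= 1 -> 0 <= c -> Rpower x c <= 1.
Proof.
  intros Hx Hc. apply Rle_trans with (Rpower 1 c).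
  - apply Rle_Rpower_l; lra.
  - unfold Rpower; rewrite ln_1, Rmult_0_r, exp_0; lra.
Qed.
Lemma rpow_le1 x c : x <= 1 -> 0 <= c -> rpow x c <= 1.
Proof. intros. unfold rpow; destruct (Rlt_dec 0 x); [apply Rpower_le1; lra|lra]. Qed.
Lemma Rpower_split x c : 0 < x -> Rpower x c = x * Rpower x (c - 1).
Proof.
  intros Hx. rewrite <- (Rpower_1 x) at 2 by auto. rewrite <- Rpower_plus. f_equal; ring.
Qed.
Lemma rpow_deriv x c : 0 < x -> derivable_pt_lim (fun y => rpow y c) x (c * Rpower x (c - 1)).
Proof.
  intros Hx. apply dl_local with (f := fun y => Rpower y c) (d := x); auto.
  - intros y Hy. rewrite rpow_pos; auto. apply Rabs_def2 in Hy; lra.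
  - apply derivable_pt_lim_power; auto.
Qed.
Lemma rpow_cont_pos x c : 0 < x -> continuity_pt (fun y => rpow y c) x.
Proof. intros; eapply dl_cont; apply rpow_deriv; auto. Qed.
Lemma Rpower_cont x c : 0 < x -> continuity_pt (fun y => Rpower y c) x.
Proof. intros; eapply dl_cont; apply derivable_pt_lim_power; auto. Qed.
Lemma rpow_cont0 c : 0 < c -> continuity_pt (fun y => rpow y c) 0.
Proof.
  intros Hc. unfold continuity_pt, continue_in, limit1_in, limit_in. simpl.
  intros eps Heps. exists (Rpower eps (/ c)). split; [apply Rpower_gt0|].
  intros y [_ Hy]. unfold Rdist in *. rewrite (rpow_nonpos 0) by lra.
  rewrite Rminus_0_r in *. destruct (Rle_dec y 0) as [Hy0|Hy0].
  - rewrite rpow_nonpos by auto. rewrite Rabs_R0; auto.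
  - rewrite rpow_pos by lra. rewrite Rabs_right by (left; apply Rpower_gt0).
    rewrite Rabs_right in Hy by lra.
    replace eps with (Rpower (Rpower eps (/ c)) c).
    + apply Rlt_Rpower_l; lra.
    + rewrite Rpower_mult. rewrite Rinv_l by lra. apply Rpower_1; auto.
Qed.


Lemma FTC a b F f (pr : Riemann_integrable f a b) : a <= b ->
  (forall x, a <= x <= b -> derivable_pt_lim F x (f x)) ->
  (forall x, a <= x <= b -> continuity_pt f x) -> RiemannInt pr = F b - F a.
Proof.
  intros Hab Hd Hc.
  rewrite (RiemannInt_P20 Hab (FTC_P1 Hab Hc) pr).
  assert (H1 := RiemannInt_P29 Hab Hc).
  assert (H2 : antiderivative f F a b).
  { split; auto. intros x Hx. exists (exist _ (f x) (Hd x Hx)). reflexivity. }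
  destruct (antiderivative_Ucte _ _ _ _ _ H1 H2) as [C HC].
  rewrite !HC; [ring|lra|lra].
Qed.

Lemma IsSF_const_open f a b c : a <= b -> (forall x, a < x < b -> f x = c) -> IsStepFun f a b.
Proof.
  intros Hab H. exists (cons a (cons b nil)). exists (cons c nil).
  unfold adapted_couple; repeat split.
  - unfold ordered_Rlist; intros; simpl in H0; inversion H0;
      [ simpl; assumption | elim (Nat.nle_succ_0 _ H2) ].
  - simpl; unfold Rmin; destruct (Rle_dec a b); [reflexivity|lra].
  - simpl; unfold Rmax; destruct (Rle_dec a b); [reflexivity|lra].
  - unfold constant_D_eq, open_interval; intros; simpl in H0.
    inversion H0; [ | elim (Nat.nle_succ_0 _ H3) ]. subst. simpl in H1. apply H; auto.
Qed.

Lemma RI_zero_open f a b : a <= b -> (forall x, a < x < b -> f x = 0) -> Riemann_integrable f a b.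
Proof.
  intros Hab H eps. exists (mkStepFun (IsSF_const_open f a b 0 Hab H)).
  exists (mkStepFun (StepFun_P4 a b 0)). split.
  - intros t _. simpl. unfold fct_cte. rewrite Rminus_diag, Rabs_R0. lra.
  - rewrite StepFun_P18. rewrite Rmult_0_l, Rabs_R0. apply cond_pos.
Qed.

Lemma RI_any f (H : forall a b, 0 < a -> a <= b -> b < 1 -> Riemann_integrable f a b) :
  forall a b, 0 < a < 1 -> 0 < b < 1 -> Riemann_integrable f a b.
Proof.
  intros a b Ha Hb. destruct (Rle_dec a b).
  - apply H; lra.
  - apply RiemannInt_P1. apply H; lra.
Qed.

Lemma improper_unique f l m : improper_int01 f l -> improper_int01 f m -> l = m.
Proof.
  intros [H1 H2] [K1 K2].
  destruct (Req_dec l m) as [|Hne]; auto. exfalso.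
  assert (Hp : 0 < Rabs (l - m)) by (apply Rabs_pos_lt; lra). set (e := Rabs (l - m) / 2).
  assert (He : e > 0) by (unfold e; lra).
  destruct (H2 e He) as [d1 [Hd1 Hd1']]. destruct (K2 e He) as [d2 [Hd2 Hd2']].
  set (d := Rmin (Rmin d1 d2) (1/2)).
  assert (Hd : 0 < d) by (unfold d; repeat apply Rmin_pos; lra).
  assert (Hd3 : d <= d1) by (unfold d; eapply Rle_trans; [apply Rmin_l|apply Rmin_l]).
  assert (Hd4 : d <= d2) by (unfold d; eapply Rle_trans; [apply Rmin_l|apply Rmin_r]).
  assert (Hd5 : d <= 1/2) by (unfold d; apply Rmin_r).
  destruct (H1 (d/2) (1 - d/2)) as [pr _]; try lra.
  specialize (Hd1' (d/2) (1-d/2) pr). specialize (Hd2' (d/2) (1-d/2) pr).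
  assert (A1 : Rabs (RiemannInt pr - l) < e) by (apply Hd1'; lra).
  assert (A2 : Rabs (RiemannInt pr - m) < e) by (apply Hd2'; lra).
  assert (Rabs (l - m) <= Rabs (RiemannInt pr - l) + Rabs (RiemannInt pr - m)).
  { replace (l - m) with (- (RiemannInt pr - l) + (RiemannInt pr - m)) by ring.
    eapply Rle_trans; [apply Rabs_triang|]. rewrite Rabs_Ropp; lra. }
  unfold e in *; lra.
Qed.

Lemma Int01_spec f l : improper_int01 f l -> Int01 f = l.
Proof.
  intros H. unfold Int01.
  apply (improper_unique f); auto.
  apply epsilon_spec. exists l; auto.
Qed.

Lemma improper_lin f g c l m : improper_int01 f l -> improper_int01 g m ->
  improper_int01 (fun x => f x + c * g x) (l + c * m).
Proof.
  intros [H1 H2] [K1 K2]. split.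
  - intros a b Ha Hab Hb. destruct (H1 a b Ha Hab Hb) as [p1 _].
    destruct (K1 a b Ha Hab Hb) as [p2 _]. exists (RiemannInt_P10 c p1 p2); auto.
  - intros eps Heps.
    set (e := eps / (2 * (1 + Rabs c))).
    assert (Hc : 0 < 1 + Rabs c) by (generalize (Rabs_pos c); lra).
    assert (He : e > 0) by (unfold e; apply Rdiv_lt_0_compat; lra).
    destruct (H2 e He) as [d1 [Hd1 Hd1']]. destruct (K2 e He) as [d2 [Hd2 Hd2']].
    set (d := Rmin (Rmin d1 d2) (1/2)).
    assert (Hd : 0 < d) by (unfold d; repeat apply Rmin_pos; lra).
    assert (Hd3 : d <= d1) by (unfold d; eapply Rle_trans; [apply Rmin_l|apply Rmin_l]).
    assert (Hd4 : d <= d2) by (unfold d; eapply Rle_trans; [apply Rmin_l|apply Rmin_r]).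
    assert (Hd5 : d <= 1/2) by (unfold d; apply Rmin_r).
    exists d. split; auto. intros a b pr Ha Had Hbd Hb.
    destruct (H1 a b) as [p1 _]; try lra. destruct (K1 a b) as [p2 _]; try lra.
    rewrite (RiemannInt_P5 pr (RiemannInt_P10 c p1 p2)).
    rewrite (RiemannInt_P13 p1 p2).
    assert (A1 : Rabs (RiemannInt p1 - l) < e) by (apply Hd1'; lra).
    assert (A2 : Rabs (RiemannInt p2 - m) < e) by (apply Hd2'; lra).
    replace (RiemannInt p1 + c * RiemannInt p2 - (l + c * m)) with
      ((RiemannInt p1 - l) + c * (RiemannInt p2 - m)) by ring.
    eapply Rle_lt_trans; [apply Rabs_triang|]. rewrite Rabs_mult.
    assert (Rabs c * Rabs (RiemannInt p2 - m) <= Rabs c * e)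
      by (apply Rmult_le_compat_l; [apply Rabs_pos|lra]).
    assert (e * (1 + Rabs c) = eps / 2) by (unfold e; field; lra).
    nra.
Qed.

Lemma improper_ext f g l : (forall x, f x = g x) -> improper_int01 f l -> improper_int01 g l.
Proof. intros H; replace g with f; auto; apply functional_extensionality; auto. Qed.


Lemma cont_near G x0 : continuity_pt G x0 -> forall eps, 0 < eps -> exists d, 0 < d /\
  forall x, Rabs (x - x0) < d -> Rabs (G x - G x0) < eps.
Proof.
  intros H eps He. destruct (H eps He) as [d [Hd Hd']]. exists d; split; auto.
  intros x Hx. destruct (Req_dec x x0) as [->|Hne].
  - rewrite Rminus_diag, Rabs_R0; auto.
  - apply (Hd' x). split; [split; [exact I| auto]|]. simpl. unfold Rdist. auto.
Qed.

Lemma theta_neg z : z < 0 -> theta z = 0.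
Proof. intros; unfold theta; destruct (Rle_dec 0 z); [lra|auto]. Qed.
Lemma theta_pos z : 0 <= z -> theta z = 1.
Proof. intros; unfold theta; destruct (Rle_dec 0 z); [auto|lra]. Qed.
Lemma theta_bound z : 0 <= theta z <= 1.
Proof. unfold theta; destruct (Rle_dec 0 z); lra. Qed.

Lemma locint_theta C A B t : 0 < t < 1 -> (forall x, 0 < x < 1 -> continuity_pt C x) ->
  forall a b, 0 < a -> a <= b -> b < 1 ->
  Riemann_integrable (fun x => C x * (A + B * theta (x - t))) a b.
Proof.
  intros Ht HC a b Ha Hab Hb.
  assert (CI : forall a b, 0 < a -> a <= b -> b < 1 -> Riemann_integrable C a b).
  { intros a' b' ? ? ?. apply continuity_implies_RiemannInt; auto.
    intros; apply HC; lra. }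
  destruct (Rle_dec t a) as [Hta|Hta].
  - apply Riemann_integrable_ext with (f := fun x => (A + B) * C x).
    + intros x Hx. rewrite Rmin_left, Rmax_right in Hx by auto.
      rewrite theta_pos by lra. ring.
    + apply Riemann_integrable_scal; auto.
  - destruct (Rlt_dec b t) as [Hbt|Hbt].
    + apply Riemann_integrable_ext with (f := fun x => A * C x).
      * intros x Hx. rewrite Rmin_left, Rmax_right in Hx by auto.
        rewrite theta_neg by lra. ring.
      * apply Riemann_integrable_scal; auto.
    + apply RiemannInt_P24 with t.
      * apply Riemann_integrable_ext with
          (f := fun x => A * C x + B * (C x * theta (x - t))).
        { intros; ring. }
        apply RiemannInt_P10.
        -- apply Riemann_integrable_scal; apply CI; lra.
        -- apply RI_zero_open; [lra|]. intros x Hx. rewrite theta_neg by lra. ring.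
      * apply Riemann_integrable_ext with (f := fun x => (A + B) * C x).
        { intros x Hx. rewrite Rmin_left, Rmax_right in Hx by lra.
          rewrite theta_pos by lra. ring. }
        apply Riemann_integrable_scal; apply CI; lra.
Qed.

Section Exist.
Variables (f g G : R -> R).
Hypothesis Hint : forall a b, 0 < a -> a <= b -> b < 1 -> Riemann_integrable f a b.
Hypothesis Hbd : forall x, 0 < x < 1 -> Rabs (f x) <= g x.
Hypothesis Hder : forall x, 0 < x < 1 -> derivable_pt_lim G x (g x).
Hypothesis Hgc : forall x, 0 < x < 1 -> continuity_pt g x.
Hypothesis HG0 : continuity_pt G 0.
Hypothesis HG1 : continuity_pt G 1.

Lemma ex_bound a b (pr : Riemann_integrable f a b) : 0 < a < 1 -> 0 < b < 1 ->
  Rabs (RiemannInt pr) <= Rabs (G b - G a).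
Proof.
  intros Ha Hb.
  assert (K : forall a b (pr : Riemann_integrable f a b), 0 < a -> a <= b -> b < 1 ->
     Rabs (RiemannInt pr) <= Rabs (G b - G a)).
  { clear a b pr Ha Hb. intros a b pr Ha Hab Hb.
    assert (pg : Riemann_integrable g a b).
    { apply continuity_implies_RiemannInt; auto. intros; apply Hgc; lra. }
    eapply Rle_trans. apply (RiemannInt_P17 pr (RiemannInt_P16 pr) Hab).
    eapply Rle_trans. apply (RiemannInt_P19 (RiemannInt_P16 pr) pg Hab).
    { intros x Hx. apply Hbd; lra. }
    rewrite (FTC a b G g pg Hab).
    - apply Rle_abs.
    - intros; apply Hder; lra.
    - intros; apply Hgc; lra. }
  destruct (Rle_dec a b).
  - apply K; lra.
  - rewrite (RiemannInt_P8 pr (RiemannInt_P1 pr)). rewrite Rabs_Ropp, Rabs_minus_sym.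
    apply K; lra.
Qed.

Definition RIa := RI_any f Hint.

Lemma ex_diff a b a' b' (pr : Riemann_integrable f a b) (pr' : Riemann_integrable f a' b') :
  0 < a < 1 -> 0 < b < 1 -> 0 < a' < 1 -> 0 < b' < 1 ->
  Rabs (RiemannInt pr - RiemannInt pr') <= Rabs (G a' - G a) + Rabs (G b - G b').
Proof.
  intros Ha Hb Ha' Hb'.
  pose (p1 := RIa a a' Ha Ha'). pose (p2 := RIa a b' Ha Hb'). pose (p3 := RIa b' b Hb' Hb).
  rewrite <- (RiemannInt_P26 p2 p3 pr). rewrite <- (RiemannInt_P26 p1 pr' p2).
  replace (RiemannInt p1 + RiemannInt pr' + RiemannInt p3 - RiemannInt pr')
    with (RiemannInt p1 + RiemannInt p3) by ring.
  eapply Rle_trans; [apply Rabs_triang|]. apply Rplus_le_compat; apply ex_bound; auto.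
Qed.

Definition an (n : nat) : R := / (INR n + 3).
Lemma an_pos n : 0 < an n < 1/2.
Proof.
  unfold an. assert (0 <= INR n) by apply pos_INR. split.
  - apply Rinv_0_lt_compat; lra.
  - replace (1/2) with (/ 2) by field. apply Rinv_lt_contravar; nra.
Qed.
Lemma an_dec n m : (n <= m)%nat -> an m <= an n.
Proof.
  intros H. unfold an. apply Rinv_le_contravar.
  - generalize (pos_INR n); lra.
  - apply le_INR in H; lra.
Qed.
Lemma an_small d : 0 < d -> exists N, an N < d.
Proof.
  intros Hd. destruct (INR_unbounded (/ d)) as [N HN]. exists N. unfold an.
  assert (0 < / d) by (apply Rinv_0_lt_compat; auto).
  rewrite <- (Rinv_inv d). apply Rinv_lt_contravar; [|lra].
  apply Rmult_lt_0_compat; generalize (pos_INR N); lra.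
Qed.
Lemma an_in n : 0 < an n < 1. Proof. generalize (an_pos n); lra. Qed.
Lemma bn_in n : 0 < 1 - an n < 1. Proof. generalize (an_pos n); lra. Qed.

Definition useq n := RiemannInt (RIa (an n) (1 - an n) (an_in n) (bn_in n)).

Lemma G_near0 eps : 0 < eps -> exists d, 0 < d /\ forall x y, 0 < x < d -> 0 < y < d ->
  Rabs (G x - G y) < eps.
Proof.
  intros He. destruct (cont_near G 0 HG0 (eps/2)) as [d [Hd Hd']]; [lra|].
  exists d; split; auto. intros x y Hx Hy.
  replace (G x - G y) with ((G x - G 0) - (G y - G 0)) by ring.
  eapply Rle_lt_trans; [apply Rabs_triang|]. rewrite Rabs_Ropp.
  assert (Rabs (G x - G 0) < eps/2) by (apply Hd'; rewrite Rminus_0_r, Rabs_right; lra).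
  assert (Rabs (G y - G 0) < eps/2) by (apply Hd'; rewrite Rminus_0_r, Rabs_right; lra).
  lra.
Qed.
Lemma G_near1 eps : 0 < eps -> exists d, 0 < d /\ forall x y, 1 - d < x < 1 -> 1 - d < y < 1 ->
  Rabs (G x - G y) < eps.
Proof.
  intros He. destruct (cont_near G 1 HG1 (eps/2)) as [d [Hd Hd']]; [lra|].
  exists d; split; auto. intros x y Hx Hy.
  replace (G x - G y) with ((G x - G 1) - (G y - G 1)) by ring.
  eapply Rle_lt_trans; [apply Rabs_triang|]. rewrite Rabs_Ropp.
  assert (Rabs (G x - G 1) < eps/2) by (apply Hd'; rewrite Rabs_left; lra).
  assert (Rabs (G y - G 1) < eps/2) by (apply Hd'; rewrite Rabs_left; lra).
  lra.
Qed.

Lemma useq_cauchy : Cauchy_crit useq.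
Proof.
  intros eps He.
  destruct (G_near0 (eps/2)) as [d0 [Hd0 H0]]; [lra|].
  destruct (G_near1 (eps/2)) as [d1 [Hd1 H1]]; [lra|].
  destruct (an_small (Rmin d0 d1)) as [N HN]; [apply Rmin_pos; auto|].
  exists N. intros n m Hn Hm. unfold Rdist, useq.
  generalize (an_dec _ _ Hn) (an_dec _ _ Hm) (an_pos n) (an_pos m) (an_pos N)
    (Rmin_l d0 d1) (Rmin_r d0 d1); intros.
  eapply Rle_lt_trans; [apply ex_diff; try apply an_in; try apply bn_in|].
  assert (Rabs (G (an m) - G (an n)) < eps/2) by (apply H0; lra).
  assert (Rabs (G (1 - an n) - G (1 - an m)) < eps/2) by (apply H1; lra).
  lra.
Qed.

Lemma improper_exists : exists l, improper_int01 f l.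
Proof.
  destruct (R_complete useq useq_cauchy) as [l Hl]. exists l. split.
  - intros a b Ha Hab Hb. exists (Hint a b Ha Hab Hb). auto.
  - intros eps He.
    destruct (G_near0 (eps/4)) as [d0 [Hd0 H0]]; [lra|].
    destruct (G_near1 (eps/4)) as [d1 [Hd1 H1]]; [lra|].
    set (d := Rmin (Rmin d0 d1) (1/2)).
    assert (Hd : 0 < d) by (unfold d; repeat apply Rmin_pos; lra).
    assert (Hd3 : d <= d0) by (unfold d; eapply Rle_trans; [apply Rmin_l|apply Rmin_l]).
    assert (Hd4 : d <= d1) by (unfold d; eapply Rle_trans; [apply Rmin_l|apply Rmin_r]).
    assert (Hd5 : d <= 1/2) by (unfold d; apply Rmin_r).
    destruct (an_small d Hd) as [N1 HN1].
    destruct (Hl (eps/2)) as [N2 HN2]; [lra|].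
    exists d. split; auto. intros a b pr Ha Had Hbd1 Hb.
    set (N := max N1 N2).
    assert (HN : an N < d).
    { apply Rle_lt_trans with (an N1); auto. apply an_dec. apply Nat.le_max_l. }
    assert (Hu : Rdist (useq N) l < eps/2) by (apply HN2; apply Nat.le_max_r).
    unfold Rdist in Hu. generalize (an_pos N); intro.
    assert (Hdf : Rabs (RiemannInt pr - useq N) <=
      Rabs (G (an N) - G a) + Rabs (G b - G (1 - an N))).
    { unfold useq. apply ex_diff; try lra; try apply an_in; try apply bn_in. }
    assert (Rabs (G (an N) - G a) < eps/4) by (apply H0; lra).
    assert (Rabs (G b - G (1 - an N)) < eps/4) by (apply H1; lra).
    replace (RiemannInt pr - l) with ((RiemannInt pr - useq N) + (useq N - l)) by ring.
    eapply Rle_lt_trans; [apply Rabs_triang|]. lra.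
Qed.
End Exist.


Lemma cp_inv f x : continuity_pt f x -> f x <> 0 -> continuity_pt (fun y => / f y) x.
Proof. intros; exact (continuity_pt_inv f x H H0). Qed.
Lemma cp_abs f x : continuity_pt f x -> continuity_pt (fun y => Rabs (f y)) x.
Proof. intros. apply cp_comp; auto. apply Rcontinuity_abs. Qed.

Lemma cont_bound p : (forall x, continuity_pt p x) -> exists M, forall x, 0 <= x <= 1 -> Rabs (p x) <= M.
Proof.
  intros Hp. destruct (continuity_ab_maj (fun y => Rabs (p y)) 0 1) as [Mx [HM _]]; [lra| |].
  - intros; apply cp_abs; auto.
  - exists (Rabs (p Mx)); auto.
Qed.

Section Weight.
Variables alpha beta A B t : R.
Hypothesis Ha : 0 < alpha.
Hypothesis Hb : 0 < beta.
Hypothesis Ht : 0 < t < 1.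

Lemma E_gen C g G : (forall x, 0 < x < 1 -> continuity_pt C x) ->
  (forall x, 0 < x < 1 -> Rabs (C x) <= g x) ->
  (forall x, 0 < x < 1 -> derivable_pt_lim G x (g x)) ->
  (forall x, 0 < x < 1 -> continuity_pt g x) ->
  continuity_pt G 0 -> continuity_pt G 1 ->
  exists l, improper_int01 (fun x => C x * (A + B * theta (x - t))) l.
Proof.
  intros HC Hbd Hd Hg H0 H1. set (K := Rabs A + Rabs B).
  assert (HK : 0 <= K) by (unfold K; generalize (Rabs_pos A) (Rabs_pos B); lra).
  apply (improper_exists _ (fun x => K * g x) (fun x => K * G x)).
  - apply locint_theta; auto.
  - intros x Hx. rewrite Rabs_mult. rewrite Rmult_comm. apply Rmult_le_compat; auto; try apply Rabs_pos.
    eapply Rle_trans; [apply Rabs_triang|]. unfold K. rewrite Rabs_mult.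
    generalize (theta_bound (x - t)); intro. rewrite (Rabs_right (theta _)) by lra.
    generalize (Rabs_pos B); nra.
  - intros x Hx. specialize (Hd x Hx).
    apply dl_mult with (f := fun _ => K) (g := G) (a := 0) in Hd; [|apply dl_const].
    eapply dl_eq; [|exact Hd]. cbv beta; ring.
  - intros; apply cp_mult; [apply cp_const|auto].
  - apply cp_mult; [apply cp_const|auto].
  - apply cp_mult; [apply cp_const|auto].
Qed.

Lemma cp_1m f x : continuity_pt f (1 - x) -> continuity_pt (fun y => f (1 - y)) x.
Proof.
  intros H. apply cp_comp with (f := fun y => 1 - y); auto. apply cp_plus; [apply cp_const|].
  apply (cp_ext (fun y => -1 * y)); [intros; ring|apply cp_mult; [apply cp_const|apply cp_id]].
Qed.
Lemma W_cont x : 0 < x < 1 -> continuity_pt (fun y => rpow y alpha * rpow (1 - y) beta) x.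
Proof.
  intros Hx. apply cp_mult. apply rpow_cont_pos; lra.
  apply (cp_1m (fun z => rpow z beta)). apply rpow_cont_pos; lra.
Qed.

Lemma dl_1m f x l : derivable_pt_lim f (1 - x) l -> derivable_pt_lim (fun y => f (1 - y)) x (- l).
Proof.
  intros H. apply dl_comp with (f := fun y => 1 - y) (a := -1) in H.
  - eapply dl_eq; [|exact H]; cbv beta; ring.
  - apply (dl_ext (fun y => 1 + -1 * y)); [intros; ring|].
    eapply dl_eq; [|apply dl_plus; [apply dl_const|apply dl_mult; [apply dl_const|apply dl_id]]]. cbv beta; ring.
Qed.

Lemma E0 p : (forall x, continuity_pt p x) ->
  exists l, improper_int01 (fun x => p x * w alpha beta A B t x) l.
Proof.
  intros Hp. destruct (cont_bound p Hp) as [M HM].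
  destruct (E_gen (fun x => p x * (rpow x alpha * rpow (1 - x) beta)) (fun _ => M) (fun x => M * x))
    as [l Hl].
  - intros. apply cp_mult; auto. apply W_cont; auto.
  - intros x Hx. rewrite Rabs_mult. rewrite <- (Rmult_1_r M).
    apply Rmult_le_compat; try apply Rabs_pos. apply HM; lra.
    rewrite Rabs_right by (apply Rle_ge, Rmult_le_pos; apply rpow_ge0).
    generalize (rpow_le1 x alpha) (rpow_le1 (1 - x) beta) (rpow_ge0 x alpha) (rpow_ge0 (1-x) beta).
    intros; nra.
  - intros. apply (dl_ext (fun y => M * y)); auto.
    eapply dl_eq; [|apply dl_mult; [apply dl_const|apply dl_id]]. cbv beta; ring.
  - intros; apply cp_const.
  - apply cp_mult; [apply cp_const|apply cp_id].
  - apply cp_mult; [apply cp_const|apply cp_id].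
  - exists l. eapply improper_ext; [|exact Hl]. intros; unfold w; ring.
Qed.

Lemma E1 p : (forall x, continuity_pt p x) ->
  exists l, improper_int01 (fun x => p x / (1 - x) * w alpha beta A B t x) l.
Proof.
  intros Hp. destruct (cont_bound p Hp) as [M HM].
  destruct (E_gen (fun x => p x / (1 - x) * (rpow x alpha * rpow (1 - x) beta))
      (fun x => M * Rpower (1 - x) (beta - 1)) (fun x => - (M / beta) * rpow (1 - x) beta))
    as [l Hl].
  - intros x Hx. apply cp_mult; [|apply W_cont; auto]. apply cp_mult; auto.
    apply cp_inv; [|lra]. apply (cp_1m (fun z => z)); apply cp_id.
  - intros x Hx. rewrite !Rabs_mult. rewrite (rpow_pos x) by lra. rewrite (rpow_pos (1 - x)) by lra.
    rewrite (Rpower_split (1 - x) beta) by lra.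
    rewrite (Rabs_right (Rpower x _)) by (left; apply Rpower_gt0).
    rewrite (Rabs_right ((1 - x) * _)) by (apply Rle_ge, Rmult_le_pos; [lra|left; apply Rpower_gt0]).
    unfold Rdiv. rewrite Rabs_mult. rewrite (Rabs_right (/ (1 - x))) by (left; apply Rinv_0_lt_compat; lra).
    assert (Rabs (p x) <= M) by (apply HM; lra).
    assert (Rpower x alpha <= 1) by (apply Rpower_le1; lra).
    generalize (Rpower_gt0 x alpha) (Rpower_gt0 (1 - x) (beta - 1)) (Rabs_pos (p x)); intros.
    replace (Rabs (p x) * / (1 - x) * (Rpower x alpha * ((1 - x) * Rpower (1 - x) (beta - 1))))
      with (Rabs (p x) * Rpower x alpha * Rpower (1 - x) (beta - 1)) by (field; lra).
    assert (Rabs (p x) * Rpower x alpha <= M) by nra. nra.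
  - intros x Hx. eapply dl_eq; [|apply dl_mult; [apply dl_const|
      apply (dl_1m (fun z => rpow z beta)); apply rpow_deriv; lra]]. cbv beta. field. lra.
  - intros x Hx. apply cp_mult; [apply cp_const|]. apply (cp_1m (fun z => Rpower z (beta - 1))). apply Rpower_cont. lra.
  - apply cp_mult; [apply cp_const|]. apply (cp_1m (fun z => rpow z beta)). apply rpow_cont_pos. lra.
  - apply cp_mult; [apply cp_const|]. apply (cp_1m (fun z => rpow z beta)). rewrite Rminus_diag. apply rpow_cont0; auto.
  - exists l. eapply improper_ext; [|exact Hl]. intros; unfold w; ring.
Qed.

Lemma E2 p : (forall x, continuity_pt p x) ->
  exists l, improper_int01 (fun x => p x / x * w alpha beta A B t x) l.
Proof.
  intros Hp. destruct (cont_bound p Hp) as [M HM].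
  destruct (E_gen (fun x => p x / x * (rpow x alpha * rpow (1 - x) beta))
      (fun x => M * Rpower x (alpha - 1)) (fun x => (M / alpha) * rpow x alpha))
    as [l Hl].
  - intros x Hx. apply cp_mult; [|apply W_cont; auto]. apply cp_mult; auto.
    apply cp_inv; [apply cp_id|lra].
  - intros x Hx. rewrite !Rabs_mult. rewrite (rpow_pos x) by lra. rewrite (rpow_pos (1 - x)) by lra.
    rewrite (Rpower_split x alpha) by lra.
    rewrite (Rabs_right (Rpower (1 - x) _)) by (left; apply Rpower_gt0).
    rewrite (Rabs_right (x * _)) by (apply Rle_ge, Rmult_le_pos; [lra|left; apply Rpower_gt0]).
    unfold Rdiv. rewrite Rabs_mult. rewrite (Rabs_right (/ x)) by (left; apply Rinv_0_lt_compat; lra).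
    assert (Rabs (p x) <= M) by (apply HM; lra).
    assert (Rpower (1 - x) beta <= 1) by (apply Rpower_le1; lra).
    generalize (Rpower_gt0 (1 - x) beta) (Rpower_gt0 x (alpha - 1)) (Rabs_pos (p x)); intros.
    replace (Rabs (p x) * / x * (x * Rpower x (alpha - 1) * Rpower (1 - x) beta))
      with (Rabs (p x) * Rpower (1 - x) beta * Rpower x (alpha - 1)) by (field; lra).
    assert (Rabs (p x) * Rpower (1 - x) beta <= M) by nra. nra.
  - intros x Hx. eapply dl_eq; [|apply dl_mult; [apply dl_const| apply rpow_deriv; lra]].
    cbv beta. field. lra.
  - intros x Hx. apply cp_mult; [apply cp_const|]. apply Rpower_cont. lra.
  - apply cp_mult; [apply cp_const|]. apply rpow_cont0; auto.
  - apply cp_mult; [apply cp_const|]. apply rpow_cont_pos. lra.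
  - exists l. eapply improper_ext; [|exact Hl]. intros; unfold w; ring.
Qed.
End Weight.


Lemma Int01_lin f g c : (exists l, improper_int01 f l) -> (exists m, improper_int01 g m) ->
  Int01 (fun x => f x + c * g x) = Int01 f + c * Int01 g.
Proof.
  intros [l Hl] [m Hm]. rewrite (Int01_spec _ _ Hl), (Int01_spec _ _ Hm).
  apply Int01_spec. apply improper_lin; auto.
Qed.
Lemma Int01_ext f g : (forall x, f x = g x) -> Int01 f = Int01 g.
Proof. intros H. f_equal. apply functional_extensionality; auto. Qed.

Section IBP.
Variables alpha beta A B t : R.
Hypothesis Ha : 0 < alpha.
Hypothesis Hb : 0 < beta.
Hypothesis Ht : 0 < t < 1.

Let w := w alpha beta A B t.
Definition I0 p := Int01 (fun x => p x * w x).
Definition IL p := Int01 (fun x => p x / (1 - x) * w x).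
Definition IK p := Int01 (fun x => p x / x * w x).

Lemma I0_lin p q c : (forall x, continuity_pt p x) -> (forall x, continuity_pt q x) ->
  I0 (fun x => p x + c * q x) = I0 p + c * I0 q.
Proof.
  intros. unfold I0. rewrite <- Int01_lin; try apply E0; auto.
  apply Int01_ext; intros; ring.
Qed.
Lemma IL_lin p q c : (forall x, continuity_pt p x) -> (forall x, continuity_pt q x) ->
  IL (fun x => p x + c * q x) = IL p + c * IL q.
Proof.
  intros. unfold IL. rewrite <- Int01_lin; try apply E1; auto.
  apply Int01_ext; intros; unfold Rdiv; ring.
Qed.
Lemma IK_lin p q c : (forall x, continuity_pt p x) -> (forall x, continuity_pt q x) ->
  IK (fun x => p x + c * q x) = IK p + c * IK q.
Proof.
  intros. unfold IK. rewrite <- Int01_lin; try apply E2; auto.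
  apply Int01_ext; intros; unfold Rdiv; ring.
Qed.

Lemma w_at0 x : x <= 0 -> w x = 0.
Proof. intros; unfold w, Defs.w. rewrite rpow_nonpos by auto. ring. Qed.
Lemma w_at1 x : 1 <= x -> w x = 0.
Proof. intros; unfold w, Defs.w. rewrite (rpow_nonpos (1 - x)) by lra. ring. Qed.

Lemma IK_x p : IK (fun x => x * p x) = I0 p.
Proof.
  unfold IK, I0. apply Int01_ext. intros x. destruct (Req_dec x 0) as [->|Hx].
  - rewrite w_at0 by lra. ring.
  - field; auto.
Qed.
Lemma IL_x p : (forall x, continuity_pt p x) -> IL (fun x => x * p x) = IL p - I0 p.
Proof.
  intros Hp. unfold IL, I0. unfold Rminus. rewrite <- (Rmult_1_l (Int01 (fun x => p x * w x))).
  rewrite Ropp_mult_distr_l. rewrite <- Int01_lin; try apply (E1 alpha beta A B t); try apply E0; auto.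
  apply Int01_ext. intros x. destruct (Req_dec x 1) as [->|Hx].
  - rewrite w_at1 by lra. ring.
  - field. lra.
Qed.

Definition Om g x := rpow x alpha * rpow (1 - x) beta * g x.
Definition Qd g dg x := (alpha * Rpower x (alpha - 1) * rpow (1 - x) beta +
   rpow x alpha * (- (beta * Rpower (1 - x) (beta - 1)))) * g x +
   rpow x alpha * rpow (1 - x) beta * dg x.

Section G.
Variables g dg : R -> R.
Hypothesis Hg : forall x, derivable_pt_lim g x (dg x).
Hypothesis Hdg : forall x, continuity_pt dg x.
Lemma g_cont x : continuity_pt g x.
Proof. eapply dl_cont; apply Hg. Qed.

Lemma Om_deriv x : 0 < x < 1 -> derivable_pt_lim (Om g) x (Qd g dg x).
Proof.
  intros Hx. unfold Om, Qd.
  eapply dl_eq; [| apply dl_mult with (f := fun y => rpow y alpha * rpow (1 - y) beta);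
    [apply dl_mult; [apply rpow_deriv; lra| apply (dl_1m (fun z => rpow z beta)); apply rpow_deriv; lra]
    | apply Hg]]. cbv beta; ring.
Qed.

Lemma Qd_cont x : 0 < x < 1 -> continuity_pt (Qd g dg) x.
Proof.
  intros Hx. unfold Qd. apply cp_plus; apply cp_mult.
  - apply cp_plus; apply cp_mult.
    + apply cp_mult; [apply cp_const|apply Rpower_cont; lra].
    + apply (cp_1m (fun z => rpow z beta)); apply rpow_cont_pos; lra.
    + apply rpow_cont_pos; lra.
    + apply (cp_ext (fun y => -1 * (beta * Rpower (1 - y) (beta - 1)))); [intros; ring|].
      apply cp_mult; [apply cp_const|]. apply cp_mult; [apply cp_const|].
      apply (cp_1m (fun z => Rpower z (beta - 1))); apply Rpower_cont; lra.
  - apply g_cont.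
  - apply W_cont; auto.
  - apply Hdg.
Qed.

Lemma Om_cont0 : continuity_pt (Om g) 0.
Proof.
  unfold Om. apply cp_mult; [apply cp_mult|apply g_cont].
  - apply rpow_cont0; auto.
  - apply (cp_1m (fun z => rpow z beta)); apply rpow_cont_pos; lra.
Qed.
Lemma Om_cont1 : continuity_pt (Om g) 1.
Proof.
  unfold Om. apply cp_mult; [apply cp_mult|apply g_cont].
  - apply rpow_cont_pos; lra.
  - apply (cp_1m (fun z => rpow z beta)). rewrite Rminus_diag. apply rpow_cont0; auto.
Qed.
Lemma Om0 : Om g 0 = 0.
Proof. unfold Om. rewrite rpow_nonpos by lra. ring. Qed.
Lemma Om1 : Om g 1 = 0.
Proof. unfold Om. rewrite (rpow_nonpos (1 - 1)) by lra. ring. Qed.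

Definition Hf x := (dg x * w x + alpha * (g x / x * w x)) + - beta * (g x / (1 - x) * w x).

Lemma Hf_eq x : 0 < x < 1 -> Hf x = Qd g dg x * (A + B * theta (x - t)).
Proof.
  intros Hx. unfold Hf, Qd, w, Defs.w. rewrite !rpow_pos by lra.
  rewrite (Rpower_split x alpha) by lra. rewrite (Rpower_split (1 - x) beta) by lra.
  field. lra.
Qed.

Lemma Int_piece a b c (pr : Riemann_integrable Hf a b) : 0 < a -> a <= b -> b < 1 ->
  (forall x, a < x < b -> A + B * theta (x - t) = c) ->
  RiemannInt pr = c * (Om g b - Om g a).
Proof.
  intros Ha' Hab Hb' Hc.
  assert (pq : Riemann_integrable (fun x => c * Qd g dg x) a b).
  { apply continuity_implies_RiemannInt; auto. intros x Hx.
    apply cp_mult; [apply cp_const|apply Qd_cont; lra]. }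
  rewrite (RiemannInt_P18 pr pq Hab).
  - rewrite (FTC a b (fun x => c * Om g x) _ pq Hab). ring.
    + intros x Hx. eapply dl_eq; [|apply dl_mult; [apply dl_const|apply Om_deriv; lra]].
      cbv beta; ring.
    + intros x Hx. apply cp_mult; [apply cp_const|apply Qd_cont; lra].
  - intros x Hx. rewrite Hf_eq by lra. rewrite Hc by auto. ring.
Qed.

Lemma IBP_direct : improper_int01 Hf (- (B * Om g t)).
Proof.
  destruct (E0 alpha beta A B t Ha Hb Ht dg Hdg) as [l0 H0].
  destruct (E2 alpha beta A B t Ha Hb Ht g g_cont) as [l2 H2].
  destruct (E1 alpha beta A B t Ha Hb Ht g g_cont) as [l1 H1].
  assert (HH := improper_lin _ _ (- beta) _ _ (improper_lin _ _ alpha _ _ H0 H2) H1).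
  split; [exact (proj1 HH)|].
  intros eps He.
  set (e0 := eps / (2 * (1 + Rabs A))). set (e1 := eps / (2 * (1 + Rabs (A + B)))).
  assert (He0 : 0 < e0) by (unfold e0; apply Rdiv_lt_0_compat; [lra|generalize (Rabs_pos A); lra]).
  assert (He1 : 0 < e1) by (unfold e1; apply Rdiv_lt_0_compat; [lra|generalize (Rabs_pos (A+B)); lra]).
  destruct (cont_near _ _ Om_cont0 e0 He0) as [d0 [Hd0 Hd0']].
  destruct (cont_near _ _ Om_cont1 e1 He1) as [d1 [Hd1 Hd1']].
  set (d := Rmin (Rmin d0 d1) (Rmin t (1 - t))).
  assert (Hd : 0 < d) by (unfold d; repeat apply Rmin_pos; lra).
  assert (Hd3 : d <= d0) by (unfold d; eapply Rle_trans; [apply Rmin_l|apply Rmin_l]).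
  assert (Hd4 : d <= d1) by (unfold d; eapply Rle_trans; [apply Rmin_l|apply Rmin_r]).
  assert (Hd5 : d <= t) by (unfold d; eapply Rle_trans; [apply Rmin_r|apply Rmin_l]).
  assert (Hd6 : d <= 1 - t) by (unfold d; eapply Rle_trans; [apply Rmin_r|apply Rmin_r]).
  exists d. split; auto. intros a b pr Ha' Had Hbd Hb'.
  pose (p1 := RiemannInt_P22 pr (conj (Rlt_le _ _ (Rlt_le_trans _ _ _ Had Hd5)) (Rlt_le _ _ (Rle_lt_trans t (1 - d) b ltac:(lra) Hbd)))).
  pose (p2 := RiemannInt_P23 pr (conj (Rlt_le _ _ (Rlt_le_trans _ _ _ Had Hd5)) (Rlt_le _ _ (Rle_lt_trans t (1 - d) b ltac:(lra) Hbd)))).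
  rewrite <- (RiemannInt_P26 p1 p2 pr).
  rewrite (Int_piece a t A p1) by (try lra; intros x Hx; rewrite theta_neg by lra; ring).
  rewrite (Int_piece t b (A + B) p2) by (try lra; intros x Hx; rewrite theta_pos by lra; ring).
  replace (A * (Om g t - Om g a) + (A + B) * (Om g b - Om g t) - - (B * Om g t))
    with ((A + B) * Om g b - A * Om g a) by ring.
  assert (Ka : Rabs (Om g a) < e0).
  { rewrite <- (Rminus_0_r (Om g a)), <- Om0. apply Hd0'. rewrite Rminus_0_r, Rabs_right; lra. }
  assert (Kb : Rabs (Om g b) < e1).
  { rewrite <- (Rminus_0_r (Om g b)), <- Om1. apply Hd1'. rewrite Rabs_left; lra. }
  unfold Rminus. eapply Rle_lt_trans; [apply Rabs_triang|]. rewrite Rabs_Ropp, !Rabs_mult.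
  assert (Rabs (A + B) * Rabs (Om g b) <= Rabs (A + B) * e1)
    by (apply Rmult_le_compat_l; [apply Rabs_pos|lra]).
  assert (Rabs A * Rabs (Om g a) <= Rabs A * e0)
    by (apply Rmult_le_compat_l; [apply Rabs_pos|lra]).
  assert (e1 * (1 + Rabs (A + B)) = eps / 2) by (unfold e1; field; generalize (Rabs_pos (A+B)); lra).
  assert (e0 * (1 + Rabs A) = eps / 2) by (unfold e0; field; generalize (Rabs_pos A); lra).
  nra.
Qed.

Lemma IBP : alpha * IK g - beta * IL g + I0 dg = - (B * rpow t alpha * rpow (1 - t) beta * g t).
Proof.
  destruct (E0 alpha beta A B t Ha Hb Ht dg Hdg) as [l0 H0].
  destruct (E2 alpha beta A B t Ha Hb Ht g g_cont) as [l2 H2].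
  destruct (E1 alpha beta A B t Ha Hb Ht g g_cont) as [l1 H1].
  assert (HH := improper_lin _ _ (- beta) _ _ (improper_lin _ _ alpha _ _ H0 H2) H1).
  assert (E := improper_unique _ _ _ HH IBP_direct).
  unfold IK, IL, I0, w. rewrite (Int01_spec _ _ H0), (Int01_spec _ _ H1), (Int01_spec _ _ H2).
  unfold Om in E. lra.
Qed.
End G.
End IBP.


Lemma psum_ext c d x n : (forall k, (k < n)%nat -> c k = d k) -> psum c x n = psum d x n.
Proof.
  induction n; intros H; simpl; auto. rewrite IHn by (intros; apply H; lia). rewrite H by lia. auto.
Qed.
Lemma psum_lin c d a x n : psum (fun k => c k + a * d k) x n = psum c x n + a * psum d x n.
Proof. induction n; simpl; [ring|]. rewrite IHn. ring. Qed.
Lemma psum_zero x n : psum (fun _ => 0) x n = 0.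
Proof. induction n; simpl; [ring|]. rewrite IHn. ring. Qed.
Lemma psum_cont c n x : continuity_pt (fun y => psum c y n) x.
Proof.
  induction n; simpl.
  - apply cp_const.
  - apply cp_plus; auto. apply cp_mult; [apply cp_const|].
    eapply dl_cont. apply derivable_pt_lim_pow.
Qed.

Definition poly_le (n : nat) (f : R -> R) : Prop := exists c, forall x, f x = psum c x n.

Lemma poly_le_cont n f : poly_le n f -> forall x, continuity_pt f x.
Proof. intros [c Hc] x. apply (cp_ext (fun y => psum c y n)); [intros; auto|apply psum_cont]. Qed.
Lemma poly_le_lin n f g a : poly_le n f -> poly_le n g -> poly_le n (fun x => f x + a * g x).
Proof.
  intros [c Hc] [d Hd]. exists (fun k => c k + a * d k). intros x. rewrite psum_lin, Hc, Hd. auto.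
Qed.
Lemma poly_le_zero n f : (forall x, f x = 0) -> poly_le n f.
Proof. intros H. exists (fun _ => 0). intros; rewrite psum_zero; auto. Qed.
Lemma poly_le_ext n f g : (forall x, f x = g x) -> poly_le n f -> poly_le n g.
Proof. intros H [c Hc]. exists c. intros; rewrite <- H; auto. Qed.
Lemma poly_le_S n f : poly_le n f -> poly_le (S n) f.
Proof.
  intros [c Hc]. exists (fun k => if Nat.ltb k n then c k else 0). intros x. simpl.
  rewrite Nat.ltb_irrefl. rewrite Hc. rewrite Rmult_0_l, Rplus_0_r.
  apply psum_ext. intros k Hk. apply Nat.ltb_lt in Hk. rewrite Hk. auto.
Qed.
Lemma poly_le_mono n m f : (n <= m)%nat -> poly_le n f -> poly_le m f.
Proof. induction 1; auto. intros; apply poly_le_S; auto. Qed.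
Lemma poly_le_pow k : poly_le (S k) (fun x => x ^ k).
Proof.
  exists (fun j => if Nat.eqb j k then 1 else 0). intros x. simpl. rewrite Nat.eqb_refl.
  rewrite (psum_ext _ (fun _ => 0)). rewrite psum_zero. ring.
  intros j Hj. destruct (Nat.eqb_spec j k); [lia|auto].
Qed.
Lemma poly_le_sub_add n f g a : poly_le n f -> poly_le n g -> poly_le n (fun x => f x - a * g x).
Proof.
  intros. apply (poly_le_ext n (fun x => f x + (- a) * g x)); [intros; ring|]. apply poly_le_lin; auto.
Qed.

Lemma monic_ext n f : monic_poly n f -> exists c, f = fun x => x ^ n + psum c x n.
Proof. intros [c Hc]. exists c. apply functional_extensionality; auto. Qed.
Lemma monic_le n f : monic_poly n f -> poly_le (S n) f.
Proof.
  intros [c Hc]. exists (fun k => if Nat.ltb k n then c k else 1). intros x. simpl.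
  rewrite Nat.ltb_irrefl. rewrite Hc.
  assert (E : psum (fun k => if Nat.ltb k n then c k else 1) x n = psum c x n)
    by (apply psum_ext; intros k Hk; apply Nat.ltb_lt in Hk; rewrite Hk; auto).
  rewrite E. ring.
Qed.
Lemma monic_cont n f : monic_poly n f -> forall x, continuity_pt f x.
Proof. intros; apply (poly_le_cont (S n)); apply monic_le; auto. Qed.
Lemma monic_of n q : poly_le n q -> monic_poly n (fun x => x ^ n + q x).
Proof. intros [c Hc]. exists c. intros; rewrite Hc; auto. Qed.
Lemma monic_sub n f g : monic_poly n f -> monic_poly n g -> poly_le n (fun x => f x - g x).
Proof.
  intros [c Hc] [d Hd]. apply (poly_le_ext n (fun x => psum c x n + (-1) * psum d x n)).
  - intros; rewrite Hc, Hd; ring.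
  - apply poly_le_lin; [exists c|exists d]; auto.
Qed.
Lemma monic_lead n q P : poly_le (S n) q -> monic_poly n P ->
  exists a, poly_le n (fun x => q x - a * P x).
Proof.
  intros [c Hc] [d Hd]. exists (c n).
  apply (poly_le_ext n (fun x => psum c x n + (- c n) * psum d x n)).
  - intros x. rewrite Hc, Hd. simpl. ring.
  - apply poly_le_lin; [exists c|exists d]; auto.
Qed.

Lemma pow_div a n : exists Q, poly_le n Q /\ forall x, x ^ S n - a ^ S n = (x - a) * (x ^ n + Q x).
Proof.
  induction n.
  - exists (fun _ => 0). split; [apply poly_le_zero; auto|]. intros; simpl; ring.
  - destruct IHn as [Q [HQ HE]]. exists (fun x => a * x ^ n + a * Q x). split.
    + apply (poly_le_ext (S n) (fun x => x ^ n + a * Q x + (a - 1) * x ^ n)); [intros; ring|].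
      apply poly_le_lin; [apply poly_le_lin; [apply poly_le_pow|apply poly_le_S; auto]|apply poly_le_pow].
    + intros x. replace (x ^ S (S n) - a ^ S (S n)) with ((x - a) * x ^ S n + a * (x ^ S n - a ^ S n))
        by (simpl; ring). rewrite HE. simpl; ring.
Qed.
Lemma psum_div a c n : exists Q, poly_le n Q /\ forall x, psum c x (S n) - psum c a (S n) = (x - a) * Q x.
Proof.
  induction n.
  - exists (fun _ => 0). split; [apply poly_le_zero; auto|]. intros; simpl; ring.
  - destruct IHn as [Q [HQ HE]]. destruct (pow_div a n) as [Q' [HQ' HE']].
    exists (fun x => Q x + c (S n) * (x ^ n + Q' x)). split.
    + apply poly_le_lin; [apply poly_le_S; auto|].
      apply (poly_le_ext (S n) (fun x => x ^ n + 1 * Q' x)); [intros; ring|].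
      apply poly_le_lin; [apply poly_le_pow|apply poly_le_S; auto].
    + intros x. change (psum c x (S (S n))) with (psum c x (S n) + c (S n) * x ^ (S n)).
      change (psum c a (S (S n))) with (psum c a (S n) + c (S n) * a ^ (S n)).
      replace (psum c x (S n) + c (S n) * x ^ S n - (psum c a (S n) + c (S n) * a ^ S n))
        with ((psum c x (S n) - psum c a (S n)) + c (S n) * (x ^ S n - a ^ S n)) by ring.
      rewrite HE, HE'. ring.
Qed.
Lemma monic_div n f a : monic_poly (S n) f -> exists Q, monic_poly n Q /\ forall x, f x - f a = (x - a) * Q x.
Proof.
  intros [c Hc]. destruct (pow_div a n) as [Q' [HQ' HE']]. destruct (psum_div a c n) as [Q [HQ HE]].
  exists (fun x => x ^ n + (Q' x + 1 * Q x)). split.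
  - apply monic_of. apply poly_le_lin; auto.
  - intros x. rewrite !Hc.
    replace (x ^ S n + psum c x (S n) - (a ^ S n + psum c a (S n)))
      with ((x ^ S n - a ^ S n) + (psum c x (S n) - psum c a (S n))) by ring.
    rewrite HE, HE'. ring.
Qed.
Lemma monic_div' n f a : monic_poly n f -> exists Q, poly_le n Q /\ forall x, f x - f a = (x - a) * Q x.
Proof.
  destruct n.
  - intros [c Hc]. exists (fun _ => 0). split; [apply poly_le_zero; auto|]. intros; rewrite !Hc; simpl; ring.
  - intros H. destruct (monic_div n f a H) as [Q [HQ HE]]. exists Q; split; auto. apply monic_le; auto.
Qed.

Fixpoint dpsum (c : nat -> R) (x : R) (n : nat) : R :=
  match n with O => 0 | S m => dpsum c x m + c m * (INR m * x ^ pred m) end.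

Lemma dpsum_der c n x : derivable_pt_lim (fun y => psum c y n) x (dpsum c x n).
Proof.
  induction n; simpl.
  - apply dl_const.
  - apply dl_plus; auto. eapply dl_eq; [|apply dl_mult; [apply dl_const|apply derivable_pt_lim_pow]].
    cbv beta; ring.
Qed.
Lemma x_pow_pred x n : x * (INR n * x ^ pred n) = INR n * x ^ n.
Proof. destruct n; simpl; ring. Qed.
Lemma dpsum_x c n x : x * dpsum c x n = psum (fun k => INR k * c k) x n.
Proof.
  induction n; simpl; [ring|]. rewrite <- IHn.
  replace (INR n * c n * x ^ n) with (c n * (INR n * x ^ n)) by ring.
  rewrite <- (x_pow_pred x n). ring.
Qed.
Lemma dpsum_le c m : poly_le m (fun x => dpsum c x (S m)).
Proof.
  induction m.
  - apply poly_le_zero. intros; simpl; ring.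
  - apply (poly_le_ext (S m) (fun x => dpsum c x (S m) + (c (S m) * INR (S m)) * x ^ m)).
    + intros; simpl; ring.
    + apply poly_le_lin; [apply poly_le_S; auto|apply poly_le_pow].
Qed.

Lemma monic_deriv n f : monic_poly n f -> exists D,
  (forall x, derivable_pt_lim f x (D x)) /\ poly_le n D /\
  poly_le n (fun x => x * D x - INR n * f x) /\
  (forall m g, n = S m -> monic_poly m g -> poly_le m (fun x => D x - INR n * g x)).
Proof.
  intros Hf. destruct (monic_ext n f Hf) as [c ->].
  exists (fun x => INR n * x ^ pred n + dpsum c x n). split; [|split; [|split]].
  - intros x. apply dl_plus; [apply derivable_pt_lim_pow|apply dpsum_der].
  - destruct n.
    + apply poly_le_zero; intros; simpl; ring.
    + apply (poly_le_ext _ (fun x => dpsum c x (S n) + INR (S n) * x ^ n)); [intros; simpl; ring|].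
      apply poly_le_lin; [apply poly_le_S, dpsum_le|apply poly_le_pow].
  - apply (poly_le_ext n (fun x => psum (fun k => INR k * c k + (- INR n) * c k) x n)).
    + intros x. rewrite psum_lin, Rmult_plus_distr_l, x_pow_pred, dpsum_x.
      ring.
    + eexists; intros; eauto.
  - intros m g -> [d Hd].
    apply (poly_le_ext m (fun x => dpsum c x (S m) + (- INR (S m)) * psum d x m)).
    + intros x. rewrite Hd. simpl (pred (S m)). ring.
    + apply poly_le_lin; [apply dpsum_le|exists d; auto].
Qed.


Lemma alg5 hn hm b u v L1 L0 : hn <> 0 -> hm <> 0 -> v * L1 = u * L0 - hm ->
  (hn / hm) * (b / hn * (u * L1)) * (b / hm * (v * L0)) = (b / hm * (v * L1)) ^ 2 + b * (b / hm * (v * L1)).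
Proof.
  intros H1 H2 E. replace ((hn / hm) * (b / hn * (u * L1)) * (b / hm * (v * L0)))
    with (b * b * (v * L1) * (u * L0) / (hm * hm)) by (field; auto).
  replace (u * L0) with (v * L1 + hm) by lra. field; auto.
Qed.
Lemma alg6 hn hm a u v K1 K0 : hn <> 0 -> hm <> 0 -> v * K1 = u * K0 + hm ->
  (hn / hm) * (a / hn * (u * K1)) * (a / hm * (v * K0)) = (a / hm * (v * K1)) ^ 2 - a * (a / hm * (v * K1)).
Proof.
  intros H1 H2 E. replace ((hn / hm) * (a / hn * (u * K1)) * (a / hm * (v * K0)))
    with (a * a * (v * K0) * (u * K1) / (hm * hm)) by (field; auto).
  replace (v * K0) with (v * K0) by auto.
  replace (u * K1) with (u * K1) by auto.
  assert (E' : u * K0 = v * K1 - hm) by lra.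
  replace (a * a * (v * K0) * (u * K1)) with (a * a * (u * K0) * (v * K1)) by ring.
  rewrite E'. field; auto.
Qed.

Section Main.
Variables alpha beta A B t : R.
Variable P : nat -> R -> R.
Hypothesis Ha : 0 < alpha.
Hypothesis Hb : 0 < beta.
Hypothesis Ht : 0 < t < 1.
Hypothesis Hmon : forall n, monic_poly n (P n).
Hypothesis Horth : forall i j, i <> j ->
     Int01 (fun x => P i x * P j x * w alpha beta A B t x) = 0.

Local Notation J0 := (I0 alpha beta A B t).
Local Notation JL := (IL alpha beta A B t).
Local Notation JK := (IK alpha beta A B t).
Local Notation h := (hn alpha beta A B t P).

Lemma Pc n x : continuity_pt (P n) x.
Proof. apply (monic_cont n); auto. Qed.
Lemma Pc2 n m x : continuity_pt (fun y => P n y * P m y) x.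
Proof. apply cp_mult; apply Pc. Qed.

Lemma J0_ext f g : (forall x, f x = g x) -> J0 f = J0 g.
Proof. intros H. unfold I0. apply Int01_ext. intros; rewrite H; auto. Qed.
Lemma JL_ext f g : (forall x, f x = g x) -> JL f = JL g.
Proof. intros H. unfold IL. apply Int01_ext. intros; rewrite H; auto. Qed.
Lemma JK_ext f g : (forall x, f x = g x) -> JK f = JK g.
Proof. intros H. unfold IK. apply Int01_ext. intros; rewrite H; auto. Qed.

Lemma cz f : (forall x, f x = 0) -> forall x, continuity_pt f x.
Proof. intros H x. apply (cp_ext (fun _ => 0)); [intros; auto|apply cp_const]. Qed.

Lemma J0_zero f : (forall x, f x = 0) -> J0 f = 0.
Proof.
  intros H. assert (E : J0 f = J0 (fun x => f x + 1 * f x)) by (apply J0_ext; intros; rewrite H; ring).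
  rewrite (I0_lin _ _ _ _ _ Ha Hb Ht f f 1) in E by (apply cz; auto). lra.
Qed.
Lemma JL_zero f : (forall x, f x = 0) -> JL f = 0.
Proof.
  intros H. assert (E : JL f = JL (fun x => f x + 1 * f x)) by (apply JL_ext; intros; rewrite H; ring).
  rewrite (IL_lin _ _ _ _ _ Ha Hb Ht f f 1) in E by (apply cz; auto). lra.
Qed.
Lemma JK_zero f : (forall x, f x = 0) -> JK f = 0.
Proof.
  intros H. assert (E : JK f = JK (fun x => f x + 1 * f x)) by (apply JK_ext; intros; rewrite H; ring).
  rewrite (IK_lin _ _ _ _ _ Ha Hb Ht f f 1) in E by (apply cz; auto). lra.
Qed.
Lemma J0_add p q c : (forall x, continuity_pt p x) -> (forall x, continuity_pt q x) ->
  J0 (fun x => p x + c * q x) = J0 p + c * J0 q.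
Proof. apply I0_lin; auto. Qed.
Lemma JL_add p q c : (forall x, continuity_pt p x) -> (forall x, continuity_pt q x) ->
  JL (fun x => p x + c * q x) = JL p + c * JL q.
Proof. apply IL_lin; auto. Qed.
Lemma JK_add p q c : (forall x, continuity_pt p x) -> (forall x, continuity_pt q x) ->
  JK (fun x => p x + c * q x) = JK p + c * JK q.
Proof. apply IK_lin; auto. Qed.
Lemma J0_scal p c : (forall x, continuity_pt p x) -> J0 (fun x => c * p x) = c * J0 p.
Proof.
  intros. rewrite (J0_ext _ (fun x => 0 + c * p x)) by (intros; ring).
  rewrite J0_add by (auto; apply cz; auto). rewrite J0_zero by auto. ring.
Qed.
Lemma JL_scal p c : (forall x, continuity_pt p x) -> JL (fun x => c * p x) = c * JL p.
Proof.
  intros. rewrite (JL_ext _ (fun x => 0 + c * p x)) by (intros; ring).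
  rewrite JL_add by (auto; apply cz; auto). rewrite JL_zero by auto. ring.
Qed.
Lemma JK_scal p c : (forall x, continuity_pt p x) -> JK (fun x => c * p x) = c * JK p.
Proof.
  intros. rewrite (JK_ext _ (fun x => 0 + c * p x)) by (intros; ring).
  rewrite JK_add by (auto; apply cz; auto). rewrite JK_zero by auto. ring.
Qed.

Lemma h_def n : h n = J0 (fun x => P n x * P n x).
Proof. unfold hn. symmetry. apply J0_ext. intros; ring. Qed.

Lemma orth n : forall q, poly_le n q -> forall m, (n <= m)%nat -> J0 (fun x => P m x * q x) = 0.
Proof.
  induction n; intros q Hq m Hm.
  - apply J0_zero. intros x. destruct Hq as [c Hc]. rewrite Hc. simpl. ring.
  - destruct (monic_lead n q (P n) Hq (Hmon n)) as [a Ha'].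
    rewrite (J0_ext _ (fun x => P m x * (q x - a * P n x) + a * (P m x * P n x))) by (intros; ring).
    rewrite J0_add.
    + rewrite (IHn _ Ha' m) by lia.
      assert (E : J0 (fun x => P m x * P n x) = 0).
      { apply (Horth m n). lia. }
      rewrite E. ring.
    + intros; apply cp_mult; [apply Pc|apply (poly_le_cont n); auto].
    + intros; apply Pc2.
Qed.

Lemma J0_monic m Q : monic_poly m Q -> J0 (fun x => P m x * Q x) = h m.
Proof.
  intros HQ. rewrite h_def.
  rewrite (J0_ext _ (fun x => P m x * (Q x - P m x) + 1 * (P m x * P m x))) by (intros; ring).
  rewrite J0_add.
  - rewrite (orth m) by (auto; apply monic_sub; auto). ring.
  - intros; apply cp_mult; [apply Pc|apply (poly_le_cont m); apply monic_sub; auto].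
  - intros; apply Pc2.
Qed.

Lemma JL_div j f Q : (forall x, continuity_pt f x) -> (forall x, continuity_pt Q x) ->
  (forall x, f x - f 1 = (x - 1) * Q x) ->
  JL (fun x => P j x * f x) = f 1 * JL (P j) - J0 (fun x => P j x * Q x).
Proof.
  intros Hf HQ HE.
  assert (CF : forall x, continuity_pt (fun y => P j y * Q y) x) by (intros; apply cp_mult; auto; apply Pc).
  rewrite (JL_ext _ (fun x => f 1 * P j x + 1 * ((x * (P j x * Q x)) + (-1) * (P j x * Q x)))).
  2:{ intros x. replace (f x) with (f 1 + (x - 1) * Q x) by (rewrite <- HE; ring). ring. }
  rewrite JL_add.
  - rewrite JL_scal by (intros; apply Pc). rewrite JL_add; auto.
    + rewrite (IL_x _ _ _ _ _ Ha Hb Ht) by auto. ring.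
    + intros; apply cp_mult; [apply cp_id|auto].
  - intros; apply cp_mult; [apply cp_const|apply Pc].
  - intros; apply cp_plus; [apply cp_mult; [apply cp_id|auto]|apply cp_mult; [apply cp_const|auto]].
Qed.

Lemma JK_div j f Q : (forall x, continuity_pt f x) -> (forall x, continuity_pt Q x) ->
  (forall x, f x - f 0 = x * Q x) ->
  JK (fun x => P j x * f x) = f 0 * JK (P j) + J0 (fun x => P j x * Q x).
Proof.
  intros Hf HQ HE.
  assert (CF : forall x, continuity_pt (fun y => P j y * Q y) x) by (intros; apply cp_mult; auto; apply Pc).
  rewrite (JK_ext _ (fun x => f 0 * P j x + 1 * (x * (P j x * Q x)))).
  2:{ intros x. replace (f x) with (f 0 + x * Q x) by (rewrite <- HE; ring). ring. }
  rewrite JK_add.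
  - rewrite JK_scal by (intros; apply Pc). rewrite (IK_x _ _ _ _ _ ). ring.
  - intros; apply cp_mult; [apply cp_const|apply Pc].
  - intros; apply cp_mult; [apply cp_id|auto].
Qed.

Lemma QL j k f : monic_poly k f -> (k <= j)%nat -> JL (fun x => P j x * f x) = f 1 * JL (P j).
Proof.
  intros Hf Hk. destruct (monic_div' k f 1 Hf) as [Q [HQ HE]].
  rewrite (JL_div j f Q); auto.
  - rewrite (orth k Q HQ j Hk). ring.
  - apply (monic_cont k); auto.
  - apply (poly_le_cont k); auto.
Qed.
Lemma QL' m : JL (fun x => P m x * P (S m) x) = P (S m) 1 * JL (P m) - h m.
Proof.
  destruct (monic_div m (P (S m)) 1 (Hmon (S m))) as [Q [HQ HE]].
  rewrite (JL_div m (P (S m)) Q); auto.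
  - rewrite J0_monic; auto.
  - apply Pc.
  - apply (monic_cont m); auto.
Qed.
Lemma QK j k f : monic_poly k f -> (k <= j)%nat -> JK (fun x => P j x * f x) = f 0 * JK (P j).
Proof.
  intros Hf Hk. destruct (monic_div' k f 0 Hf) as [Q [HQ HE]].
  rewrite (JK_div j f Q); auto.
  - rewrite (orth k Q HQ j Hk). ring.
  - apply (monic_cont k); auto.
  - apply (poly_le_cont k); auto.
  - intros x. rewrite HE. ring.
Qed.
Lemma QK' m : JK (fun x => P m x * P (S m) x) = P (S m) 0 * JK (P m) + h m.
Proof.
  destruct (monic_div m (P (S m)) 0 (Hmon (S m))) as [Q [HQ HE]].
  rewrite (JK_div m (P (S m)) Q); auto.
  - rewrite J0_monic; auto.
  - apply Pc.
  - apply (monic_cont m); auto.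
  - intros x. rewrite HE. ring.
Qed.

Local Notation Dt := (B * rpow t alpha * rpow (1 - t) beta).

Lemma IB1 n : alpha * JK (fun x => P n x * P n x) - beta * JL (fun x => P n x * P n x)
  = - (Dt * (P n t * P n t)).
Proof.
  destruct (monic_deriv n (P n) (Hmon n)) as [Dn [Hd [Hle [Hx _]]]].
  assert (HDc := poly_le_cont n Dn Hle).
  assert (HI := IBP alpha beta A B t Ha Hb Ht (fun x => P n x * P n x)
    (fun x => Dn x * P n x + P n x * Dn x) (fun x => dl_mult _ _ x _ _ (Hd x) (Hd x))
    (fun x => cp_plus _ _ x (cp_mult _ _ x (HDc x) (Pc n x)) (cp_mult _ _ x (Pc n x) (HDc x)))).
  rewrite (J0_ext _ (fun x => P n x * Dn x + 1 * (P n x * Dn x))) in HI by (intros; cbv beta; ring).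
  rewrite J0_add in HI by (intros; apply cp_mult; auto; apply Pc).
  rewrite (orth n Dn Hle n) in HI by lia. lra.
Qed.

Lemma IB2 m : alpha * JK (fun x => P (S m) x * P m x) - beta * JL (fun x => P (S m) x * P m x)
  + INR (S m) * h m = - (Dt * (P (S m) t * P m t)).
Proof.
  destruct (monic_deriv (S m) (P (S m)) (Hmon (S m))) as [Dn [Hd [Hle [Hx Hsub]]]].
  destruct (monic_deriv m (P m) (Hmon m)) as [Dm [Hdm [Hlem _]]].
  assert (HDc := poly_le_cont _ Dn Hle). assert (HDmc := poly_le_cont _ Dm Hlem).
  assert (Hs := Hsub m (P m) eq_refl (Hmon m)).
  assert (HI := IBP alpha beta A B t Ha Hb Ht (fun x => P (S m) x * P m x)
    (fun x => Dn x * P m x + P (S m) x * Dm x) (fun x => dl_mult _ _ x _ _ (Hd x) (Hdm x))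
    (fun x => cp_plus _ _ x (cp_mult _ _ x (HDc x) (Pc m x)) (cp_mult _ _ x (Pc (S m) x) (HDmc x)))).
  rewrite (J0_ext _ (fun x => (P m x * (Dn x - INR (S m) * P m x) + INR (S m) * (P m x * P m x))
     + 1 * (P (S m) x * Dm x))) in HI by (intros; cbv beta; ring).
  assert (C1 : forall x, continuity_pt (fun x => P m x * (Dn x - INR (S m) * P m x)) x).
  { intros; apply cp_mult; [apply Pc|apply (poly_le_cont m); auto]. }
  rewrite J0_add in HI.
  2:{ intros; apply cp_plus; [auto|apply cp_mult; [apply cp_const|apply Pc2]]. }
  2:{ intros; apply cp_mult; auto; apply Pc. }
  rewrite J0_add in HI by (auto; intros; apply Pc2).
  rewrite (orth m _ Hs m) in HI by lia. rewrite (orth m _ Hlem (S m)) in HI by lia.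
  rewrite <- h_def in HI. lra.
Qed.

Lemma IB3 n : beta * JL (fun x => P n x * P n x) = (alpha + beta + 1 + 2 * INR n) * h n
  + Dt * t * (P n t * P n t).
Proof.
  destruct (monic_deriv n (P n) (Hmon n)) as [Dn [Hd [Hle [Hx _]]]].
  assert (HDc := poly_le_cont n Dn Hle).
  assert (Hxc := poly_le_cont n _ Hx).
  assert (HI := IBP alpha beta A B t Ha Hb Ht (fun x => x * (P n x * P n x))
    (fun x => 1 * (P n x * P n x) + x * (Dn x * P n x + P n x * Dn x))
    (fun x => dl_mult _ _ x _ _ (dl_id x) (dl_mult _ _ x _ _ (Hd x) (Hd x)))
    (fun x => cp_plus _ _ x (cp_mult _ _ x (cp_const 1 x) (Pc2 n n x))
       (cp_mult _ _ x (cp_id x) (cp_plus _ _ x (cp_mult _ _ x (HDc x) (Pc n x)) (cp_mult _ _ x (Pc n x) (HDc x)))))).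
  rewrite IK_x in HI. rewrite (IL_x _ _ _ _ _ Ha Hb Ht) in HI by (intros; apply Pc2).
  rewrite (J0_ext (fun x => 1 * (P n x * P n x) + x * (Dn x * P n x + P n x * Dn x))
     (fun x => (P n x * P n x + 2 * (P n x * (x * Dn x - INR n * P n x)))
     + (2 * INR n) * (P n x * P n x))) in HI by (intros; cbv beta; ring).
  rewrite J0_add in HI by (intros; first [apply Pc2 | apply cp_plus; [apply Pc2|apply cp_mult; [apply cp_const|apply cp_mult; [apply Pc|apply Hxc]]]]).
  rewrite J0_add in HI by (intros; first [apply Pc2 | apply cp_mult; [apply Pc|apply Hxc]]).
  rewrite (orth n _ Hx n) in HI by lia. rewrite <- h_def in HI. lra.
Qed.

Variable al : nat -> R.
Hypothesis Hh : forall n, 0 < h n.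
Hypothesis Hrec : forall n x, x * P n x = P (S n) x + al n * P n x
                 + betan alpha beta A B t P n * Pprev P n x.

Local Notation Rn_ := (Rn alpha beta A B t P).
Local Notation rn_ := (rn alpha beta A B t P).
Local Notation xn_ := (xn alpha beta A B t P).
Local Notation yn_ := (yn alpha beta A B t P).
Local Notation bn_ := (betan alpha beta A B t P).

Lemma hnz n : h n <> 0.
Proof. generalize (Hh n); lra. Qed.

Lemma x_eq n : xn_ n = beta / h n * JL (fun x => P n x * P n x).
Proof. unfold xn. f_equal. unfold IL. apply Int01_ext. intros; cbv beta zeta; ring_simplify; unfold Rdiv; ring. Qed.
Lemma y_eq m : yn_ (S m) = beta / h m * JL (fun x => P (S m) x * P m x).
Proof. reflexivity. Qed.
Lemma R_eq n : Rn_ n = Dt * (P n t * P n t) / h n.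
Proof. unfold Rn. unfold Rdiv. ring. Qed.
Lemma r_eq m : rn_ (S m) = Dt * (P (S m) t * P m t) / h m.
Proof. unfold rn. unfold Rdiv. ring. Qed.
Lemma b_eq m : bn_ (S m) = h (S m) / h m.
Proof. reflexivity. Qed.

Lemma id1 n : rn_ (S n) + rn_ n = (t - al n) * Rn_ n.
Proof.
  assert (H := Hrec n t). destruct n as [|m].
  - simpl in H. rewrite r_eq, R_eq. simpl rn.
    assert (E : P 1 t = t * P 0 t - al 0 * P 0 t) by lra. rewrite E.
    field. apply hnz.
  - simpl Pprev in H. rewrite b_eq in H. rewrite !r_eq, R_eq.
    assert (E : P (S (S m)) t = t * P (S m) t - al (S m) * P (S m) t - h (S m) / h m * P m t) by lra.
    rewrite E. field. split; apply hnz.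
Qed.

Lemma Pprev_c n x : continuity_pt (Pprev P n) x.
Proof. destruct n; simpl; [apply cp_const|apply Pc]. Qed.

Lemma id2 n : - (yn_ (S n) + yn_ n) = (al n - 1) * xn_ n + beta.
Proof.
  assert (E1 : JL (fun x => x * (P n x * P n x)) = JL (fun x => P n x * P n x) - h n).
  { rewrite (IL_x _ _ _ _ _ Ha Hb Ht) by (intros; apply Pc2). rewrite h_def. auto. }
  assert (E2 : JL (fun x => x * (P n x * P n x)) = (JL (fun x => P (S n) x * P n x)
      + al n * JL (fun x => P n x * P n x)) + bn_ n * JL (fun x => P n x * Pprev P n x)).
  { rewrite (JL_ext _ (fun x => (P (S n) x * P n x + al n * (P n x * P n x))
      + bn_ n * (P n x * Pprev P n x))).
    2:{ intros x. replace (x * (P n x * P n x)) with ((x * P n x) * P n x) by ring.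
        rewrite Hrec. ring. }
    rewrite JL_add.
    - rewrite JL_add; auto; intros; apply Pc2.
    - intros; apply cp_plus; [apply Pc2|apply cp_mult; [apply cp_const|apply Pc2]].
    - intros; apply cp_mult; [apply Pc|apply Pprev_c]. }
  rewrite y_eq, x_eq. destruct n as [|m].
  - simpl Pprev in E2. rewrite (JL_zero (fun x => P 0 x * 0)) in E2 by (intros; ring).
    simpl yn.
    assert (E : JL (fun x => P 1 x * P 0 x) = JL (fun x => P 0 x * P 0 x) - h 0
       - al 0 * JL (fun x => P 0 x * P 0 x)) by lra.
    rewrite E. field. apply hnz.
  - simpl Pprev in E2. rewrite b_eq in E2. rewrite y_eq.
    assert (E : JL (fun x => P (S (S m)) x * P (S m) x) = JL (fun x => P (S m) x * P (S m) x) - h (S m)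
       - al (S m) * JL (fun x => P (S m) x * P (S m) x)
       - h (S m) / h m * JL (fun x => P (S m) x * P m x)) by lra.
    rewrite E. field. split; apply hnz.
Qed.

Lemma xform n : xn_ n = 2 * INR n + 1 + alpha + beta + t * Rn_ n.
Proof.
  rewrite x_eq, R_eq. assert (H := IB3 n).
  replace (beta / h n * JL (fun x => P n x * P n x)) with ((beta * JL (fun x => P n x * P n x)) / h n)
    by (field; apply hnz).
  rewrite H. field. apply hnz.
Qed.

Lemma id3 n : yn_ (S n) + yn_ n - rn_ (S n) - rn_ n
       = 2 * INR n + 1 + alpha - al n * (xn_ n - Rn_ n).
Proof.
  assert (H1 := id1 n). assert (H2 := id2 n). assert (H3 := xform n).
  assert (E : yn_ (S n) + yn_ n = - ((al n - 1) * xn_ n + beta)) by lra.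
  replace (yn_ (S n) + yn_ n - rn_ (S n) - rn_ n) with ((yn_ (S n) + yn_ n) - (rn_ (S n) + rn_ n)) by ring.
  rewrite E, H1. rewrite H3. ring.
Qed.

Lemma id4 m : bn_ (S m) * Rn_ (S m) * Rn_ m = rn_ (S m) ^ 2.
Proof. rewrite b_eq, !R_eq, r_eq. field. split; apply hnz. Qed.

Lemma id5 m : bn_ (S m) * xn_ (S m) * xn_ m = yn_ (S m) ^ 2 + beta * yn_ (S m).
Proof.
  rewrite b_eq, !x_eq, y_eq.
  rewrite (QL (S m) (S m) (P (S m))) by (auto; lia).
  rewrite (QL m m (P m)) by (auto; lia).
  rewrite (QL (S m) m (P m)) by (auto; lia).
  apply alg5; try apply hnz.
  rewrite <- (QL (S m) m (P m)) by (auto; lia). rewrite <- QL'.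
  apply JL_ext. intros; ring.
Qed.

Lemma XR n : xn_ n - Rn_ n = alpha / h n * JK (fun x => P n x * P n x).
Proof.
  rewrite x_eq, R_eq. assert (H := IB1 n).
  replace (alpha / h n * JK (fun x => P n x * P n x)) with ((alpha * JK (fun x => P n x * P n x)) / h n)
    by (field; apply hnz).
  replace (alpha * JK (fun x => P n x * P n x)) with
    (beta * JL (fun x => P n x * P n x) - (Dt * (P n t * P n t))) by lra.
  field. apply hnz.
Qed.
Lemma YR m : yn_ (S m) - rn_ (S m) - INR (S m) = alpha / h m * JK (fun x => P (S m) x * P m x).
Proof.
  rewrite y_eq, r_eq. assert (H := IB2 m).
  replace (alpha / h m * JK (fun x => P (S m) x * P m x)) with
    ((alpha * JK (fun x => P (S m) x * P m x)) / h m) by (field; apply hnz).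
  replace (alpha * JK (fun x => P (S m) x * P m x)) with
    (beta * JL (fun x => P (S m) x * P m x) - INR (S m) * h m - (Dt * (P (S m) t * P m t))) by lra.
  field. apply hnz.
Qed.

Lemma id6 m : bn_ (S m) * (xn_ (S m) - Rn_ (S m)) * (xn_ m - Rn_ m)
   = (yn_ (S m) - rn_ (S m) - INR (S m)) ^ 2 - alpha * (yn_ (S m) - rn_ (S m) - INR (S m)).
Proof.
  rewrite b_eq, !XR, YR.
  rewrite (QK (S m) (S m) (P (S m))) by (auto; lia).
  rewrite (QK m m (P m)) by (auto; lia).
  rewrite (QK (S m) m (P m)) by (auto; lia).
  apply alg6; try apply hnz.
  rewrite <- (QK (S m) m (P m)) by (auto; lia). rewrite <- QK'.
  apply JK_ext. intros; ring.
Qed.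

Lemma id7 m : bn_ (S m) * (xn_ (S m) * Rn_ m + xn_ m * Rn_ (S m))
  = (2 * INR (S m) + alpha + beta) * yn_ (S m) - (2 * INR (S m) + alpha) * rn_ (S m)
    + 2 * yn_ (S m) * rn_ (S m) - INR (S m) * (INR (S m) + alpha).
Proof.
  assert (H4 := id4 m). assert (H5 := id5 m). assert (H6 := id6 m).
  replace (bn_ (S m) * (xn_ (S m) * Rn_ m + xn_ m * Rn_ (S m))) with
    (bn_ (S m) * xn_ (S m) * xn_ m + bn_ (S m) * Rn_ (S m) * Rn_ m
     - bn_ (S m) * (xn_ (S m) - Rn_ (S m)) * (xn_ m - Rn_ m)) by ring.
  rewrite H4, H5, H6. ring.
Qed.
End Main.


Theorem mainTheorem4 (alpha beta A B t : R) (P : nat -> R -> R) (al : nat -> R) :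
  0 < alpha -> 0 < beta -> 0 <= A -> 0 <= A + B -> (A <> 0 \/ B <> 0) ->
  0 < t < 1 ->
  (* P_n are the monic orthogonal polynomials for w(.;t) *)
  (forall n, monic_poly n (P n)) ->
  (forall i j, i <> j ->
     Int01 (fun x => P i x * P j x * w alpha beta A B t x) = 0) ->
  (forall n, 0 < hn alpha beta A B t P n) ->
  (* al n = alpha_n: the three-term recurrence coefficients *)
  (forall n x, x * P n x = P (S n) x + al n * P n x
                 + betan alpha beta A B t P n * Pprev P n x) ->
  let R_ := Rn alpha beta A B t P in
  let r_ := rn alpha beta A B t P in
  let x_ := xn alpha beta A B t P in
  let y_ := yn alpha beta A B t P in
  let b_ := betan alpha beta A B t P in
  (forall n : nat,
     r_ (S n) + r_ n = (t - al n) * R_ n /\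
     - (y_ (S n) + y_ n) = (al n - 1) * x_ n + beta /\
     y_ (S n) + y_ n - r_ (S n) - r_ n
       = 2 * INR n + 1 + alpha - al n * (x_ n - R_ n)) /\
  (forall n : nat, (1 <= n)%nat ->
     b_ n * R_ n * R_ (n - 1)%nat = r_ n ^ 2 /\
     b_ n * x_ n * x_ (n - 1)%nat = y_ n ^ 2 + beta * y_ n /\
     b_ n * (x_ n - R_ n) * (x_ (n - 1)%nat - R_ (n - 1)%nat)
       = (y_ n - r_ n - INR n) ^ 2 - alpha * (y_ n - r_ n - INR n) /\
     b_ n * (x_ n * R_ (n - 1)%nat + x_ (n - 1)%nat * R_ n)
       = (2 * INR n + alpha + beta) * y_ n - (2 * INR n + alpha) * r_ n
         + 2 * y_ n * r_ n - INR n * (INR n + alpha)).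
Proof.
  intros Ha Hb HA HAB Hne Ht Hmon Horth Hh Hrec R_ r_ x_ y_ b_.
  subst R_ r_ x_ y_ b_. split.
  - intros n. split; [|split].
    + eapply id1; eauto.
    + eapply id2; eauto.
    + eapply id3; eauto.
  - intros n Hn. destruct n as [|m]; [lia|]. replace (S m - 1)%nat with m by lia.
    split; [|split; [|split]].
    + eapply id4; eauto.
    + eapply id5; eauto.
    + eapply id6; eauto.
    + eapply id7; eauto.
Qed.
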